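(* Let $t>1$ be an integer and let $A$ be a connected $Gt$-NEDB graph with constant $\acute{\gamma}_A$ and diameter $d$. Then $d-1\le t\,\acute{\gamma}_A$.
   Context: All graphs are finite, simple, undirected. $d_A(u,v)$ is the shortest-path distance in $A$; for a vertex $v$ and an edge $f'=\alpha'\beta'$, $d_A(v,f')=\min\{d_A(v,\alpha'),d_A(v,\beta')\}$. For an edge $f=\alpha\beta$, $m^A_\alpha(f)$ is the number of edges $f'\in E(A)$ with $d_A(\alpha,f')<d_A(\beta,f')$, and $m^A_\beta(f)$ is defined symmetrically. For an integer $t>1$, a connected graph $A$ is generalized $t$-nicely edge distance-balanced ($Gt$-NEDB) if there is a positive integer $\acute{\gamma}_A$ such that every edge $f$ has its endpoints labelled $\alpha,\beta$ with $m^A_\alpha(f)=t\,m^A_\beta(f)$ and $m^A_\beta(f)=\acute{\gamma}_A$. *)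

(* Defs.v *)
(* A finite simple graph is a symmetric irreflexive
   relation e on a finType T. *)
From mathcomp Require Import all_boot.
Set Implicit Arguments. Unset Strict Implicit. Unset Printing Implicit Defensive.

Section Graph.
Variables (T : finType) (e : rel T).

Definition walk_len (u v : T) (n : nat) : bool :=
  [exists p : n.-tuple T, path e u p && (last u p == v)].

(* shortest-path distance: least n with a walk of length n
   (every shortest walk has length < #|T|; returns #|T| if unreachable,
   which never happens in a connected graph) *)
Definition gdist (u v : T) : nat :=
  find (walk_len u v) (iota 0 #|T|).

Definition connected_graph : Prop := forall u v : T, connect e u v.

Definition edges : {set {set T}} :=
  [set E : {set T} | [exists x, exists y, e x y && (E == [set x; y])]].

Definition dist_edge (v : T) (E : {set T}) : nat :=
  \big[minn/#|T|]_(x in E) gdist v x.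

Definition m_end (a b : T) : nat :=
  #|[set F in edges | dist_edge a F < dist_edge b F]|.

Definition diameter : nat := \max_(u : T) \max_(v : T) gdist u v.

Definition GtNEDB (t gamma : nat) : Prop :=
  [/\ 1 < t, connected_graph, 0 < gamma &
   forall x y : T, e x y ->
     (m_end x y = t * m_end y x /\ m_end y x = gamma) \/
     (m_end y x = t * m_end x y /\ m_end x y = gamma)].

End Graph.

(* Main.v *)
Require Import Defs.
From mathcomp Require Import all_boot.
From mathcomp Require Import zify.
Set Implicit Arguments. Unset Strict Implicit. Unset Printing Implicit Defensive.

Lemma last_take' (T : Type) (x : T) (s : seq T) k :
  k <= size s -> last x (take k s) = nth x (x :: s) k.
Proof.
elim: s x k => [|y s IH] x [|k] //= hk; rewrite IH //.
by case: k hk => //= k hk; apply: set_nth_default.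
Qed.

Section Aux.
Variables (T : finType) (e : rel T).

Lemma walk_lenP a b n :
  reflect (exists p : seq T, [/\ size p = n, path e a p & last a p = b])
          (walk_len e a b n).
Proof.
apply: (iffP existsP).
  by case=> p /andP[hp /eqP hl]; exists (val p); rewrite size_tuple.
case=> p [hs hp hl]; have hs' : size p == n by rewrite hs.
by exists (Tuple hs'); rewrite /= hp hl eqxx.
Qed.

Lemma walk_cat a b c m n :
  walk_len e a b m -> walk_len e b c n -> walk_len e a c (m + n).
Proof.
move=> /walk_lenP[p [sp pp lp]] /walk_lenP[q [sq pq lq]].
apply/walk_lenP; exists (p ++ q); split.
- by rewrite size_cat sp sq.
- by rewrite cat_path pp lp pq.
- by rewrite last_cat lp.
Qed.

Lemma walk_short a b : connect e a b -> exists2 n, n < #|T| & walk_len e a b n.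
Proof.
case/connectP=> p pp ->.
case: (shortenP pp) => p' pp' up' _.
exists (size p'); last by apply/walk_lenP; exists p'.
have := card_uniqP up'; rewrite /= => h.
have := max_card (mem (a :: p')); rewrite h //.
Qed.

Lemma gdist_spec a b : connect e a b ->
  [/\ gdist e a b < #|T|, walk_len e a b (gdist e a b) &
      forall n, n < gdist e a b -> ~~ walk_len e a b n].
Proof.
move=> /walk_short[n ltn w].
have hh : has (walk_len e a b) (iota 0 #|T|).
  by apply/hasP; exists n => //; rewrite mem_iota.
have lt : gdist e a b < #|T|.
  by rewrite /gdist -{2}(size_iota 0 #|T|) -has_find.
split=> //.
  by have := nth_find 0 hh; rewrite nth_iota.
move=> m hm; have := before_find 0 hm; rewrite nth_iota ?add0n.
  by move=> ->.
exact: ltn_trans hm lt.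
Qed.

Lemma gdist_le a b n : n < #|T| -> walk_len e a b n -> gdist e a b <= n.
Proof.
move=> hn w; rewrite leqNgt; apply/negP=> h.
by have := before_find 0 h; rewrite nth_iota // add0n w.
Qed.

Lemma dist_edge2_le a x y : dist_edge e a [set x; y] <= gdist e a x.
Proof.
rewrite /dist_edge.
have : x \in index_enum T by rewrite mem_index_enum.
have : x \in [set x; y] by rewrite setU11.
elim: (index_enum T) => // z r IH hx /=; rewrite inE => /orP[/eqP<-|hr].
  by rewrite big_cons hx geq_minl.
rewrite big_cons; case: ifP => _; last exact: IH.
by rewrite geq_min IH ?orbT.
Qed.

Lemma dist_edge2_ge a x y i : i <= #|T| -> i <= gdist e a x -> i <= gdist e a y ->
  i <= dist_edge e a [set x; y].
Proof.
move=> h0 h1 h2; rewrite /dist_edge.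
apply: (big_ind (fun m => i <= m)) => // [m1 m2 k1 k2|z].
  by rewrite leq_min k1 k2.
by rewrite !inE => /orP[]/eqP->.
Qed.

End Aux.

Theorem lemma4p2 (T : finType) (e : rel T) (e_sym : symmetric e)
  (e_irr : irreflexive e) (t gamma : nat) :
  1 < t -> connected_graph e -> GtNEDB e t gamma ->
  diameter e - 1 <= t * gamma.
Proof.
move=> t1 conn [_ _ g0 H].
have key : forall u v, gdist e u v <= (t * gamma).+1.
  move=> u v.
  case: (gdist_spec (conn u v)) => ltD /walk_lenP[p [sp pp lp]] minD.
  move: ltD sp minD; set D := gdist e u v => ltD sp minD.
  case: (leqP D 1) => [hD|hD]; first by lia.
  pose x k := nth u (u :: p) k.
  have xe : forall k, k < D -> e (x k) (x k.+1).
    move=> k hk; move/(pathP u): pp => /(_ k); rewrite sp => /(_ hk).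
    by [].
  have seg : forall i j, i <= j -> j <= D -> walk_len e (x i) (x j) (j - i).
    move=> i j hij hj; apply/walk_lenP.
    have pj : path e u (take j p) by exact: take_path.
    move: pj; rewrite -(cat_take_drop i (take j p)) cat_path => /andP[_ pd].
    exists (drop i (take j p)); split.
    - by rewrite size_drop size_takel // sp.
    - by move: pd; rewrite take_takel // last_take' // sp; lia.
    - have e1 : x i = last u (take i (take j p)).
        by rewrite take_takel // last_take' // sp; lia.
      by rewrite e1 -last_cat cat_take_drop last_take' // sp.
  have xD : x D = v by rewrite -lp /x -sp -last_take' // take_size.
  have du : forall k, k <= D -> gdist e u (x k) = k.
    move=> k hk; apply/eqP; rewrite eqn_leq; apply/andP; split.
      apply: gdist_le; first lia.
      by have := seg 0 k (leq0n _) hk; rewrite subn0.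
    case: (gdist_spec (conn u (x k))) => _ w _.
    rewrite leqNgt; apply/negP => hlt.
    have := walk_cat w (seg k D hk (leqnn _)); rewrite xD => w'.
    by have := minD _ (_ : _ < D) ; move=> /(_ (gdist e u (x k) + (D - k))) /(_ ltac:(lia)); rewrite w'.
  pose f (i : 'I_D.-1) := [set x i.+1; x i.+2].
  have finj : injective f.
    move=> i j hf.
    have hi : x i.+1 \in f j by rewrite -hf setU11.
    have hj : x j.+1 \in f i by rewrite hf setU11.
    have li := ltn_ord i; have lj := ltn_ord j.
    move: hi hj; rewrite !inE => /orP[/eqP hi|/eqP hi] /orP[/eqP hj|/eqP hj];
    (move: (f_equal (gdist e u) hi) (f_equal (gdist e u) hj);
     rewrite !du; try lia; move=> a b; apply: val_inj => /=; lia).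
  have sub : [set f i | i in 'I_D.-1] \subset
             [set F in edges e | dist_edge e (x 1) F < dist_edge e (x 0) F].
    apply/subsetP => F /imsetP[i _ ->]; have li := ltn_ord i.
    rewrite inE; apply/andP; split.
      rewrite inE; apply/existsP; exists (x i.+1); apply/existsP; exists (x i.+2).
      by rewrite xe ?eqxx //; lia.
    apply: (leq_trans (n := i.+1)).
      apply: leq_ltn_trans (dist_edge2_le _ _ _ _) _.
      apply: leq_ltn_trans (gdist_le (n := i.+1 - 1) _ _) _; first lia.
        by apply: seg; lia.
      lia.
    apply: dist_edge2_ge; first lia.
      by rewrite (du i.+1) //; lia.
    by rewrite (du i.+2) //; lia.
  have := subset_leq_card sub; rewrite card_imset // card_ord.
  rewrite -/(m_end e (x 1) (x 0)) => hm.
  have : m_end e (x 1) (x 0) <= t * gamma.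
    case: (H _ _ (xe 0 (ltnW hD))) => [[h1 h2]|[h1 h2]].
      by rewrite h2 leq_pmull //; lia.
    by rewrite h1 h2.
  lia.
have : diameter e <= (t * gamma).+1.
  by apply/bigmax_leqP => u _; apply/bigmax_leqP => v _; exact: key.
lia.
Qed.
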